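(* For every non-constant Boolean function $f:\{0,1\}^n\to\{0,1\}$ and every $0<\epsilon<1$, $M_\epsilon(f)\ge\frac12\deg_\pm(f)$.
   Context: $\mathsf N_\epsilon(f)$ is the minimum degree of a real polynomial $p$ with $|p(x)|\le\epsilon$ whenever $f(x)=0$ and $|p(x)|\ge1$ whenever $f(x)=1$; $\overline f=1-f$; $M_\epsilon(f)=\max\{\mathsf N_\epsilon(f),\mathsf N_\epsilon(\overline f)\}$. The sign degree $\deg_\pm(f)$ is the minimum degree of a real polynomial $p$ such that for all $x\in\{0,1\}^n$, $p(x)<0$ iff $f(x)=1$. *)

(* Defs.v *)
From HB Require Import structures.
From mathcomp Require Import all_boot all_order all_algebra.
From mathcomp Require Import mpoly.
From mathcomp Require Import boolp reals.

Set Implicit Arguments.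
Unset Strict Implicit.
Unset Printing Implicit Defensive.

Import Order.TTheory GRing.Theory Num.Theory.
Local Open Scope ring_scope.

(* A Boolean function on {0,1}^n; points of the cube are n-tuples of bits
   (false = 0, true = 1). *)
Definition boolfun (n : nat) := n.-tuple bool -> bool.

Definition cube_pt (R : nzRingType) (n : nat) (x : n.-tuple bool) : 'I_n -> R :=
  fun i => (tnth x i)%:R.

(* total degree of a multivariate polynomial (degree of 0 is 0) *)
Definition mdegree (R : nzRingType) (n : nat) (p : {mpoly R[n]}) : nat :=
  (msize p).-1.

Definition fcompl (n : nat) (f : boolfun n) : boolfun n := fun x => ~~ f x.

Definition nonconstant (n : nat) (f : boolfun n) : Prop :=
  exists x y, f x != f y.

Definition N_witness (R : realType) (n : nat) (eps : R) (f : boolfun n)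
  (p : {mpoly R[n]}) : Prop :=
  forall x : n.-tuple bool,
    (f x = false -> `|p.@[cube_pt R x]| <= eps) /\
    (f x = true -> 1 <= `|p.@[cube_pt R x]|).

Definition sign_witness (R : realType) (n : nat) (f : boolfun n)
  (p : {mpoly R[n]}) : Prop :=
  forall x : n.-tuple bool, (p.@[cube_pt R x] < 0) <-> f x = true.

(* least natural number satisfying P (0 if none, which never happens here) *)
Definition least_nat (P : nat -> Prop) : nat :=
  match pselect (exists d, P d) with
  | left h => @ex_minn (fun d => `[< P d >]) (let: ex_intro d hd := h in
                         ex_intro _ d (asboolT hd))
  | right _ => 0%N
  end.

Definition Neps (R : realType) (n : nat) (eps : R) (f : boolfun n) : nat :=
  least_nat (fun d => exists p : {mpoly R[n]},
                 (mdegree p <= d)%N /\ N_witness eps f p).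

Definition Meps (R : realType) (n : nat) (eps : R) (f : boolfun n) : nat :=
  maxn (Neps eps f) (Neps eps (fcompl f)).

Definition sign_deg (R : realType) (n : nat) (f : boolfun n) : nat :=
  least_nat (fun d => exists p : {mpoly R[n]},
                 (mdegree p <= d)%N /\ sign_witness f p).

(* Main.v *)
Require Import Defs.
From HB Require Import structures.
From mathcomp Require Import all_boot all_order all_algebra.
From mathcomp Require Import mpoly.
From mathcomp Require Import boolp reals.
Import Order.TTheory GRing.Theory Num.Theory.
Local Open Scope ring_scope.

Lemma least_nat_le (P : nat -> Prop) d : P d -> (least_nat P <= d)%N.
Proof.
move=> Pd; rewrite /least_nat; case: pselect => [h|h]; last by [].
case: ex_minnP => m _ H; apply: H; exact/asboolP.
Qed.

Lemma least_nat_spec (P : nat -> Prop) : (exists d, P d) -> P (least_nat P).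
Proof.
move=> ex; rewrite /least_nat; case: pselect => [h|//].
by case: ex_minnP => m /asboolP.
Qed.

Lemma meval_prod (R : realType) n (v : 'I_n -> R) (F : 'I_n -> {mpoly R[n]}) :
  (\prod_(i < n) F i).@[v] = \prod_(i < n) (F i).@[v].
Proof. exact: (big_morph _ (mevalM v) (meval1 v)). Qed.

Lemma meval_sumT (R : realType) n (v : 'I_n -> R) (P : pred (n.-tuple bool))
  (F : n.-tuple bool -> {mpoly R[n]}) :
  (\sum_(x | P x) F x).@[v] = \sum_(x | P x) (F x).@[v].
Proof. exact: (big_morph _ (mevalD v) (meval0 v)). Qed.

Lemma interp (R : realType) n (f : boolfun n) : exists p : {mpoly R[n]},
  forall y, p.@[cube_pt R y] = (f y)%:R.
Proof.
exists (\sum_(x : n.-tuple bool | f x)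
          \prod_(i < n) (if tnth x i then 'X_i else 1 - 'X_i)).
move=> y; rewrite meval_sumT.
have E : forall x : n.-tuple bool,
  (\prod_(i < n) (if tnth x i then 'X_i else 1 - 'X_i) : {mpoly R[n]}).@[cube_pt R y]
  = (x == y)%:R.
  move=> x; rewrite meval_prod.
  have [->|nxy] := eqVneq x y.
    apply: big1 => i _.
    case E: (tnth y i); rewrite ?mevalB ?meval1 ?mevalXU /cube_pt E /= ?subr0 //.
  have [i Hi] : exists i, tnth x i != tnth y i.
    apply/existsP; apply: contraR nxy => /existsPn H.
    by apply/eqP/eq_from_tnth => i; move: (H i); rewrite negbK => /eqP.
  rewrite (bigD1 i) //= [X in X * _](_ : _ = 0) ?mul0r //.
  move: Hi; case Ex: (tnth x i); case Ey: (tnth y i) => //= _;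
  by rewrite ?mevalB ?meval1 ?mevalXU /cube_pt Ey /= ?subrr.
under eq_bigr do rewrite E.
case fy: (f y).
  rewrite (bigD1 y) //= eqxx big1 ?addr0 // => x /andP[_ /negbTE ->] //.
rewrite big1 // => x fx; case: eqP => // exy; by move: fx; rewrite exy fy.
Qed.

Theorem fact3p1 (R : realType) (n : nat) (f : boolfun n) (eps : R) :
  nonconstant f -> 0 < eps -> eps < 1 ->
  (sign_deg R f <= 2 * Meps eps f)%N.
Proof.
move=> _ e0 e1.
have exN : exists d, exists p : {mpoly R[n]}, (mdegree p <= d)%N /\ N_witness eps f p.
  have [p Hp] := @interp R n f.
  exists (mdegree p), p; split => // x; rewrite Hp.
  by split => ->; rewrite ?normr0 ?normr1 ?(ltW e0).
have [p [Hd Hw]] := least_nat_spec _ exN.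
rewrite /Meps; apply: (@leq_trans (2 * Neps eps f)); last by rewrite leq_mul2l leq_maxl orbT.
apply: least_nat_le _ _ _; exists (eps%:MP - p * p); split.
  apply: (@leq_trans (2 * mdegree p)); last by rewrite leq_mul2l Hd orbT.
  rewrite /mdegree.
  have [->|p0] := eqVneq p 0.
    by rewrite mul0r subr0 msizeC; case: (eps != 0).
  rewrite -msize_poly_eq0 in p0.
  have Hs := msizeD_le (eps%:MP) (- (p * p)).
  rewrite msizeN msizeM ?msizeC in Hs; last by rewrite -msize_poly_eq0.
  2: by rewrite -msize_poly_eq0.
  move: Hs p0; case: (msize p) => // s Hs _.
  have H2 : (msize (eps%:MP - p * p) <= (s + s).+1)%N.
    apply: leq_trans Hs _; rewrite geq_max addSn addnS /= leqnn andbT.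
    by case: (eps != 0).
  move: H2; case: (msize _) => //= k; rewrite mul2n -addnn //.
move=> x; rewrite mevalB mevalM mevalC.
have [Hf0 Hf1] := Hw x.
set a := p.@[cube_pt R x] in Hf0 Hf1 *.
case fx: (f x); split => // H.
- have h1 := Hf1 fx.
  rewrite subr_lt0; apply: (lt_le_trans e1).
  have : 1 * 1 <= `|a| * `|a| by apply: ler_pM.
  by rewrite mul1r -normrM ger0_norm // -expr2 sqr_ge0.
- exfalso; move: H; apply/negP.
  have h0 := Hf0 fx.
  rewrite subr_lt0 -real_leNgt ?num_real //.
  have : `|a| * `|a| <= eps * eps by apply: ler_pM.
  rewrite -normrM ger0_norm -?expr2 ?sqr_ge0 // => h.
  apply: (le_trans h); rewrite expr2 ger_pMr //; exact: ltW.
Qed.
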